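(* The language $P^*_n=\{w \in \{1,\dots,n\}^* : |w|_a \geq 1 \text{ for all } a \in \{1,\dots,n\}\}$ requires regular expressions of length at least $\mathrm{rpn}(P^*_n) \geq \Omega\big(4^n n^{- (3+\log n)/4}\big)$.
   Context: $|w|_a$ is the number of occurrences of letter $a$ in $w$. Regular expressions are built from $\epsilon$ and letters by union, concatenation and star (no $\emptyset$); $\mathrm{rpn}(L)$ is the minimum number of syntax-tree nodes of an expression describing $L$. Logarithms are base 2. *)

(* Defs.v *)
From mathcomp Require Import all_boot.
From Stdlib Require Import Reals ClassicalEpsilon.
Set Implicit Arguments. Unset Strict Implicit. Unset Printing Implicit Defensive.

Inductive regex (T : Type) : Type :=
  | REps : regex T
  | RLet : T -> regex T
  | RUnion : regex T -> regex T -> regex T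
  | RCat : regex T -> regex T -> regex T
  | RStar : regex T -> regex T.
Arguments REps {T}.

Fixpoint rsize (T : Type) (e : regex T) : nat :=
  match e with
  | REps => 1
  | RLet _ => 1
  | RUnion e1 e2 => (rsize e1 + rsize e2).+1
  | RCat e1 e2 => (rsize e1 + rsize e2).+1
  | RStar e1 => (rsize e1).+1
  end.

Inductive rmatch (T : Type) : regex T -> seq T -> Prop :=
  | rm_eps : rmatch REps [::]
  | rm_let a : rmatch (RLet a) [:: a]
  | rm_unionl e1 e2 w : rmatch e1 w -> rmatch (RUnion e1 e2) w
  | rm_unionr e1 e2 w : rmatch e2 w -> rmatch (RUnion e1 e2) w
  | rm_cat e1 e2 u v : rmatch e1 u -> rmatch e2 v -> rmatch (RCat e1 e2) (u ++ v)
  | rm_star_nil e : rmatch (RStar e) [::]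
  | rm_star_cat e u v : rmatch e u -> rmatch (RStar e) v -> rmatch (RStar e) (u ++ v).

Definition describes (T : Type) (e : regex T) (L : seq T -> Prop) : Prop :=
  forall w, rmatch e w <-> L w.

Definition describable (T : Type) (L : seq T -> Prop) : Prop :=
  exists e : regex T, describes e L.

Definition has_rsize (T : Type) (L : seq T -> Prop) (k : nat) : bool :=
  if excluded_middle_informative (exists e : regex T, describes e L /\ rsize e = k)
  then true else false.

Lemma has_rsize_ex (T : Type) (L : seq T -> Prop) :
  describable L -> exists k, has_rsize L k.
Proof.
move=> [e He]; exists (rsize e); rewrite /has_rsize.
by case: excluded_middle_informative => // [[]]; exists e.
Qed.

(* rpn(L): minimal number of syntax-tree nodes of an expression describing L
   (set to 0 by convention when L is not describable; irrelevant here). *)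
Definition rpn (T : Type) (L : seq T -> Prop) : nat :=
  match excluded_middle_informative (describable L) with
  | left H => ex_minn (has_rsize_ex H)
  | right _ => 0
  end.

Definition Pstar (n : nat) (w : seq 'I_n) : Prop :=
  forall a : 'I_n, (1 <= count_mem a w)%N.

Definition log2 (x : R) : R := (ln x / ln 2)%R.

(* Main.v *)
Require Import Defs.
From mathcomp Require Import all_boot.
From Stdlib Require Import Reals Lra Lia Psatz ClassicalEpsilon.
From mathcomp Require Import zify.
Set Implicit Arguments. Unset Strict Implicit. Unset Printing Implicit Defensive.
Local Open Scope R_scope.

Definition pb (P : Prop) : bool := if excluded_middle_informative P then true else false.
Lemma pbP P : reflect P (pb P).
Proof. by rewrite /pb; case: excluded_middle_informative => h; constructor. Qed.

Lemma rm_eps_inv (T : Type) (w : seq T) : rmatch REps w -> w = [::].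
Proof. by move=> h; inversion h. Qed.
Lemma rm_let_inv (T : Type) a (w : seq T) : rmatch (RLet a) w -> w = [:: a].
Proof. by move=> h; inversion h. Qed.
Lemma rm_union_inv (T : Type) e1 e2 (w : seq T) :
  rmatch (RUnion e1 e2) w -> rmatch e1 w \/ rmatch e2 w.
Proof. by move=> h; inversion h; [left|right]. Qed.
Lemma rm_cat_inv (T : Type) e1 e2 (w : seq T) :
  rmatch (RCat e1 e2) w -> exists u v, w = u ++ v /\ rmatch e1 u /\ rmatch e2 v.
Proof. by move=> h; inversion h; exists u, v. Qed.

Lemma INR_muln (a b : nat) : INR (a * b)%nat = INR a * INR b.
Proof. exact: mult_INR. Qed.
Lemma INR_addn (a b : nat) : INR (a + b)%nat = INR a + INR b.
Proof. exact: plus_INR. Qed.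
Lemma rsize_union (T : Type) (e1 e2 : regex T) :
  INR (rsize (RUnion e1 e2)) = INR (rsize e1) + INR (rsize e2) + 1.
Proof. by rewrite [rsize _]/= S_INR INR_addn. Qed.
Lemma rsize_cat (T : Type) (e1 e2 : regex T) :
  INR (rsize (RCat e1 e2)) = INR (rsize e1) + INR (rsize e2) + 1.
Proof. by rewrite [rsize _]/= S_INR INR_addn. Qed.
Lemma uniq_cat_disj (T : eqType) (u v : seq T) x :
  uniq (u ++ v) -> x \in u -> x \in v -> False.
Proof. rewrite cat_uniq => /and3P [_ /hasPn h _] xu xv. by move: (h x xv); rewrite /= xu. Qed.
Lemma le_INR' (a b : nat) : (a <= b)%nat -> INR a <= INR b.
Proof. by move/leP; apply: le_INR. Qed.
Lemma rsize_ge1 (T : Type) (e : regex T) : 1 <= INR (rsize e).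
Proof. apply: (le_INR' (a:=1)); case: e => //=. Qed.

Lemma card_sub_seq n (S : {set 'I_n}) (w : seq 'I_n) :
  {subset S <= w} -> (#|S| <= size w)%nat.
Proof.
move=> h; apply: leq_trans (card_size w); apply: subset_leq_card; apply/subsetP => x; exact: h.
Qed.

Lemma sizeW_le n (S : {set 'I_n}) (W : seq (seq 'I_n)) :
  uniq W -> (forall w, w \in W -> perm_eq w (enum S)) -> (size W <= #|S|`!)%nat.
Proof.
move=> uW hW; rewrite cardE -size_permutations ?enum_uniq //.
apply: uniq_leq_size => // w /hW; by rewrite mem_permutations.
Qed.

Lemma key n (T : nat -> R) (T0 : forall m, 0 <= T m)
 (HT : forall m, T m <= 1 \/ ((1 < m)%nat /\ forall k, (0 < k < m)%nat ->
         T m <= INR 'C(m,k) * (T k + T (m-k)%nat)))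
 (e : regex 'I_n) : forall (S : {set 'I_n}) (W : seq (seq 'I_n)),
   (forall w, rmatch e w -> {subset S <= w}) ->
   uniq W -> (forall w, w \in W -> rmatch e w /\ perm_eq w (enum S)) ->
   T #|S| * INR (size W) <= INR (rsize e) * INR (#|S|`!).
Proof.
elim: e => [|a|e1 IH1 e2 IH2|e1 IH1 e2 IH2|e1 IH1] S W hS uW hW;
 (have hWs : (size W <= #|S|`!)%nat by apply: sizeW_le => // w /hW []);
 (have Wge0 := pos_INR (size W));
 (have Hr := rsize_ge1 (_ : regex 'I_n));
 (case: (HT #|S|) => [HT1 | [Hm HTr]];
  [apply: Rle_trans (_ : 1 * INR (size W) <= _);
   [by apply: Rmult_le_compat_r | rewrite Rmult_1_l;
    apply: Rle_trans (_ : 1 * INR (#|S|`!) <= _);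
    [by rewrite Rmult_1_l; apply: le_INR' |
     apply: Rmult_le_compat_r; [exact: pos_INR | exact: Hr]]] | ]).
- have := card_sub_seq (hS _ (@rm_eps 'I_n)); by rewrite leqNgt ltnW.
- have := card_sub_seq (hS _ (rm_let a)); by rewrite /= leqNgt Hm.
- set W1 := [seq w <- W | pb (rmatch e1 w)].
  set W2 := [seq w <- W | ~~ pb (rmatch e1 w)].
  have h1 := IH1 S W1 (fun w h => hS w (rm_unionl e2 h)) (filter_uniq _ uW).
  have h2 := IH2 S W2 (fun w h => hS w (rm_unionr e1 h)) (filter_uniq _ uW).
  have /h1 {}h1 : forall w, w \in W1 -> rmatch e1 w /\ perm_eq w (enum S).
    move=> w; rewrite mem_filter => /andP [/pbP h /hW [_ hp]]; by split.
  have /h2 {}h2 : forall w, w \in W2 -> rmatch e2 w /\ perm_eq w (enum S).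
    move=> w; rewrite mem_filter => /andP [/pbP h /hW [hm hp]]; split => //.
    by case: (rm_union_inv hm).
  have -> : size W = (size W1 + size W2)%nat.
    by rewrite !size_filter -(count_predC (fun w => pb (rmatch e1 w))).
  rewrite INR_addn rsize_union.
  have := pos_INR (#|S|`!); lra.
- have [W0|[w0 w0W]] : W = [::] \/ exists w0, w0 \in W.
    by case: (W) => [|x s]; [left | right; exists x; rewrite inE eqxx].
    rewrite W0 [INR (size _)]/= Rmult_0_r; apply: Rmult_le_pos; [have := Hr (RCat e1 e2); lra | exact: pos_INR].
  have [hm0 hp0] := hW w0 w0W.
  have [u0 [v0 [E0 [hu0 hv0]]]] := rm_cat_inv hm0.
  have cover : forall u v, rmatch e1 u -> rmatch e2 v -> {subset S <= u ++ v}.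
    by move=> u v hu hv; apply: hS; apply: rm_cat.
  have memS : forall w, w \in W -> forall x, (x \in w) = (x \in S).
    by move=> w /hW [_ /perm_mem h] x; rewrite h mem_enum.
  have uniqW : forall w, w \in W -> uniq w.
    by move=> w /hW [_ /perm_uniq ->]; exact: enum_uniq.
  set A := [set x in u0].
  have u0S : forall x, x \in u0 -> x \in S.
    by move=> x xu; rewrite -(memS _ w0W) E0 mem_cat xu.
  have u0v0 : forall x, x \in u0 -> x \in v0 -> False.
    by move=> x; apply: uniq_cat_disj; rewrite -E0; apply: uniqW.
  have cov1 : forall u, rmatch e1 u -> {subset A <= u}.
    move=> u hu x; rewrite inE => xu0.
    have := cover _ _ hu hv0 x (u0S _ xu0); rewrite mem_cat => /orP [//|xv0].
    by case: (u0v0 _ xu0 xv0).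
  have cov2 : forall v, rmatch e2 v -> {subset S :\: A <= v}.
    move=> v hv x; rewrite !inE => /andP [xnu0 xS].
    have := cover _ _ hu0 hv x xS; rewrite mem_cat => /orP [xu0|//].
    by rewrite xu0 in xnu0.
  have splitP : forall w u v, w \in W -> w = u ++ v -> rmatch e1 u -> rmatch e2 v ->
      perm_eq u (enum A) /\ perm_eq v (enum (S :\: A)).
    move=> w u v wW Ew hu hv.
    have uw : uniq (u ++ v) by rewrite -Ew; apply: uniqW.
    have inS : forall x, x \in u ++ v -> x \in S by move=> x; rewrite -Ew memS.
    have eu : forall x, (x \in u) = (x \in A).
      move=> x; apply/idP/idP => [xu | /cov1 -> //].
      have xS : x \in S by apply: inS; rewrite mem_cat xu.
      have := cover _ _ hu0 hv x xS; rewrite mem_cat inE => /orP [//|xv].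
      by case: (uniq_cat_disj uw xu xv).
    split.
      apply: uniq_perm; [by move: uw; rewrite cat_uniq => /and3P [] | exact: enum_uniq |].
      by move=> x; rewrite mem_enum eu.
    apply: uniq_perm; [by move: uw; rewrite cat_uniq => /and3P [] | exact: enum_uniq |].
    move=> x; rewrite mem_enum; apply/idP/idP => [xv | /cov2 -> //].
    have xS : x \in S by apply: inS; rewrite mem_cat xv orbT.
    rewrite !inE xS andbT; apply/negP => xA.
    have xu : x \in u by apply: (cov1 _ hu); rewrite inE.
    by case: (uniq_cat_disj uw xu xv).
  set W1 := [seq u <- permutations (enum A) | pb (rmatch e1 u)].
  set W2 := [seq v <- permutations (enum (S :\: A)) | pb (rmatch e2 v)].
  have mW1 : forall u, u \in W1 -> rmatch e1 u /\ perm_eq u (enum A).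
    by move=> u; rewrite mem_filter mem_permutations => /andP [/pbP].
  have mW2 : forall v, v \in W2 -> rmatch e2 v /\ perm_eq v (enum (S :\: A)).
    by move=> u; rewrite mem_filter mem_permutations => /andP [/pbP].
  have uW1 : uniq W1 by apply: filter_uniq; apply: permutations_uniq.
  have uW2 : uniq W2 by apply: filter_uniq; apply: permutations_uniq.
  have h1 := IH1 A W1 cov1 uW1 mW1.
  have h2 := IH2 _ W2 cov2 uW2 mW2.
  have s1 := sizeW_le uW1 (fun u hu => (mW1 u hu).2).
  have s2 := sizeW_le uW2 (fun u hu => (mW2 u hu).2).
  have hsz : (size W <= size W1 * size W2)%nat.
    rewrite -(size_allpairs cat); apply: uniq_leq_size => // w wW.
    have [hm _] := hW w wW; have [u [v [Ew [hu hv]]]] := rm_cat_inv hm.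
    have [pu pv] := splitP _ u v wW Ew hu hv.
    rewrite Ew; apply: allpairs_f; rewrite mem_filter mem_permutations ?pu ?pv andbT; exact/pbP.
  have AS : A \subset S by apply/subsetP => x; rewrite inE; apply: u0S.
  have cardA : (#|A| + #|S :\: A| = #|S|)%nat.
    by rewrite -(cardsID A S) (setIidPr AS).
  have ek : #|S :\: A| = (#|S| - #|A|)%nat by lia.
  rewrite ek in h2 s2.
  rewrite rsize_cat.
  move: h1 h2 s1 s2 hsz HTr (Hr e1) (Hr e2) (T0 #|S|) (T0 #|A|) (T0 (#|S| - #|A|)%nat).
  move: (bin_fact (leq_subr #|S :\: A| #|S|)).
  rewrite -cardA addnK.
  move: (#|A|) (#|S :\: A|) => k l.
  rewrite (addnC k l) addnK.
  move: (size W1) (size W2) (size W) (rsize e1) (rsize e2) => a1 a2 w r1 r2.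
  move=> Hbin h1 h2 s1 s2 hsz HTr' r1g r2g Tm Tk Tl.
  have F1 := pos_INR k`!; have F2 := pos_INR l`!.
  have A1 := pos_INR a1; have A2 := pos_INR a2.
  case: (posnP k) => [k0|kp].
    subst k; rewrite addn0.
    have wa2 : (w <= a2)%nat by apply: leq_trans hsz _; rewrite -[X in (_ <= X)%nat]mul1n leq_mul2r s1 orbT.
    have := Rmult_le_compat_l _ _ _ Tm (le_INR' wa2); rewrite addn0.
    have : 0 <= (INR r1 + 1) * INR l`! by apply: Rmult_le_pos; lra.
    lra.
  case: (posnP l) => [l0|lp].
    subst l; rewrite add0n.
    have wa1 : (w <= a1)%nat by apply: leq_trans hsz _; rewrite -[X in (_ <= X)%nat]muln1 leq_mul2l s2 orbT.
    have := Rmult_le_compat_l _ _ _ Tk (le_INR' wa1).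
    have : 0 <= (INR r2 + 1) * INR k`! by apply: Rmult_le_pos; lra.
    lra.
  have hk : (0 < k < l + k)%nat by lia.
  move: (HTr' k hk); rewrite addnK => HC.
  have Cge0 := pos_INR 'C(l + k, k).
  have EM : INR (l + k)`! = INR 'C(l + k, k) * INR k`! * INR l`!.
    by rewrite -Hbin !INR_muln Rmult_assoc.
  have st1 := Rmult_le_compat_l _ _ _ Tm (le_INR' hsz); rewrite INR_muln in st1.
  have st2 : T (l + k)%nat * (INR a1 * INR a2) <=
             INR 'C(l + k, k) * (T k + T l) * (INR a1 * INR a2).
    by apply: Rmult_le_compat_r => //; apply: Rmult_le_pos.
  have st3 : T k * INR a1 * INR a2 <= INR r1 * INR k`! * INR l`!.
    apply: Rmult_le_compat => //; [exact: Rmult_le_pos | exact: le_INR'].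
  have st4 : T l * INR a2 * INR a1 <= INR r2 * INR l`! * INR k`!.
    apply: Rmult_le_compat => //; [exact: Rmult_le_pos | exact: le_INR'].
  have st5 := Rmult_le_compat_l _ _ _ Cge0 (Rplus_le_compat _ _ _ _ st3 st4).
  have : 0 <= INR (l + k)`! by apply: pos_INR.
  rewrite EM; nra.
- have := card_sub_seq (hS _ (rm_star_nil e1)); by rewrite leqNgt ltnW.
Qed.

Lemma count_in n (a : 'I_n) w : (1 <= count_mem a w)%nat = (a \in w).
Proof. by rewrite -has_pred1 has_count. Qed.

Definition rsig n : regex 'I_n := RStar (foldr (@RUnion _) REps (map (@RLet _) (enum 'I_n))).

Lemma letters_in n (a : 'I_n) (l : seq 'I_n) : a \in l ->
  rmatch (foldr (@RUnion _) REps (map (@RLet _) l)) [:: a].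
Proof.
elim: l => // b l IH; rewrite inE => /orP [/eqP -> | /IH h] /=.
  by apply: rm_unionl; apply: rm_let.
by apply: rm_unionr.
Qed.

Lemma rsig_all n (w : seq 'I_n) : rmatch (rsig n) w.
Proof.
elim: w => [|a w IH]; first exact: rm_star_nil.
apply: (@rm_star_cat _ _ [:: a] w) => //; apply: letters_in; exact: mem_enum.
Qed.

Definition rsub n (s : seq 'I_n) : regex 'I_n :=
  foldr (fun a r => RCat (rsig n) (RCat (RLet a) r)) (rsig n) s.

Lemma rsub_mem n (s w : seq 'I_n) : rmatch (rsub s) w -> {subset s <= w}.
Proof.
elim: s w => // a s IH w /= h.
have [u [v [Ew [_ h2]]]] := rm_cat_inv h.
have [u' [v' [Ev [h3 h4]]]] := rm_cat_inv h2.
have hv := IH _ h4; rewrite (rm_let_inv h3) in Ev; subst w v.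
move=> x; rewrite inE => /orP [/eqP -> | /hv xv]; rewrite !mem_cat ?inE ?eqxx ?xv ?orbT //.
Qed.

Lemma rsub_subseq n (w s : seq 'I_n) : subseq s w -> rmatch (rsub s) w.
Proof.
elim: w s => [|x w IH] [|a s] //=; try by move=> _; apply: rsig_all.
case: ifP => [/eqP -> /IH h | _ /IH h].
  apply: (@rm_cat _ _ _ [::] (x :: w)); first exact: rm_star_nil.
  exact: (@rm_cat _ _ _ [:: x] w (rm_let x) h).
move: h => /= /rm_cat_inv [u [v [-> [_ hv]]]].
exact: (@rm_cat _ _ _ (x :: u) v (rsig_all _) hv).
Qed.

Lemma foldr_union_r (T : eqType) (f : seq T -> regex T) (e0 : regex T) (L : seq (seq T)) (s w : seq T) :
  s \in L -> rmatch (f s) w -> rmatch (foldr (@RUnion _) e0 (map f L)) w.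
Proof.
elim: L => // t L IH /=; rewrite inE => /orP [/eqP -> h | /IH h /h]; [exact: rm_unionl | exact: rm_unionr].
Qed.

Lemma foldr_union_l (T : eqType) (f : seq T -> regex T) (e0 : regex T) (L : seq (seq T)) w :
  rmatch (foldr (@RUnion _) e0 (map f L)) w -> rmatch e0 w \/ exists s, s \in L /\ rmatch (f s) w.
Proof.
elim: L => [|t L IH] /=; first by left.
case/rm_union_inv => [h | /IH [h | [s [hs h]]]]; [right; exists t; by rewrite inE eqxx | by left | right; exists s; by rewrite inE hs orbT].
Qed.

Lemma Pstar_describable n : describable (@Pstar n).
Proof.
exists (foldr (@RUnion _) (rsub (enum 'I_n)) (map (@rsub n) (permutations (enum 'I_n)))) => w.
split.
  case/foldr_union_l => [h | [s [hs h]]] a; rewrite count_in.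
    by apply: (rsub_mem h); rewrite mem_enum.
  apply: (rsub_mem h).
  by move: hs; rewrite mem_permutations => /perm_mem ->; rewrite mem_enum.
move=> hP; apply: (@foldr_union_r _ _ _ _ (undup w)).
  rewrite mem_permutations; apply: uniq_perm; [exact: undup_uniq | exact: enum_uniq |].
  by move=> x; rewrite mem_undup mem_enum -count_in hP.
apply: rsub_subseq; exact: undup_subseq.
Qed.

Lemma rpn_ge n (T : nat -> R) (T0 : forall m, 0 <= T m)
 (HT : forall m, T m <= 1 \/ ((1 < m)%nat /\ forall k, (0 < k < m)%nat ->
         T m <= INR 'C(m,k) * (T k + T (m-k)%nat))) :
  T n <= INR (rpn (@Pstar n)).
Proof.
rewrite /rpn; case: excluded_middle_informative => [D | ND]; last first.
  by case: (ND (Pstar_describable n)).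
case: ex_minnP => k hk _; move: hk; rewrite /has_rsize.
case: excluded_middle_informative => // [[e [de ek]]] _; rewrite -ek.
have := @key n T T0 HT e [set: 'I_n] (permutations (enum [set: 'I_n])).
rewrite cardsT card_ord size_permutations ?enum_uniq // -cardE cardsT card_ord.
have hf := pos_INR n`!.
have hf' : 0 < INR n`! by apply: lt_0_INR; apply/ltP; exact: fact_gt0.
move=> h; apply: (Rmult_le_reg_r _ _ _ hf'); apply: h.
- move=> w /de hP a _; by rewrite -count_in.
- exact: permutations_uniq.
- move=> w; rewrite mem_permutations => hp; split => //; apply/de => a.
  by rewrite count_in (perm_mem hp) mem_enum inE.
Qed.

Lemma INR_muln' (a b : nat) : INR (a * b)%nat = INR a * INR b.
Proof. exact: mult_INR. Qed.
Lemma INR_addn' (a b : nat) : INR (a + b)%nat = INR a + INR b.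
Proof. exact: plus_INR. Qed.
Lemma le_INR2 (a b : nat) : (a <= b)%nat -> INR a <= INR b.
Proof. by move/leP; apply: le_INR. Qed.
Lemma lt_INR2 (a b : nat) : (a < b)%nat -> INR a < INR b.
Proof. by move/ltP; apply: lt_INR. Qed.
Lemma INR_lt_nat (a b : nat) : INR a < INR b -> (a < b)%nat.
Proof. by move/INR_lt/ltP. Qed.
Lemma INR_expn (a b : nat) : INR (expn a b) = INR a ^ b.
Proof. elim: b => [|b IH]; first by []. rewrite expnS INR_muln' IH /=; ring. Qed.

Definition lam := ln 2.
Lemma lam_gt : / 2 < lam. Proof. exact: ln_lt_2. Qed.
Lemma lam_lt : lam < 1.
Proof.
rewrite /lam -[1](ln_exp 1); apply: ln_increasing; first lra.
have := exp_ineq1 1; lra.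
Qed.

Lemma ln0 : ln 0 = 0.
Proof. rewrite /ln; case: Rlt_dec => [h|h] //. exfalso; lra. Qed.

Lemma ln_le' x y : 0 < x -> x <= y -> ln x <= ln y.
Proof. move=> hx [h|->]; [left; exact: ln_increasing | lra]. Qed.

Lemma ln_le_sub1 y : 0 < y -> ln y <= y - 1.
Proof. move=> hy; have := exp_ineq1_le (ln y); rewrite exp_ln //; lra. Qed.

Lemma ln_ineq a b : 0 < a -> 0 < b -> 1 - b / a <= ln a - ln b.
Proof.
move=> ha hb; have := ln_le_sub1 (Rdiv_lt_0_compat _ _ hb ha).
rewrite /Rdiv ln_mult ?ln_Rinv //; [lra | exact: Rinv_0_lt_compat].
Qed.

Lemma INR_pos m : (0 < m)%nat -> 0 < INR m.
Proof. by move=> h; apply: lt_0_INR; apply/ltP. Qed.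

Lemma ln_nat_ge0 m : 0 <= ln (INR m).
Proof.
case: m => [|m]; first by rewrite /= ln0; lra.
rewrite -ln_1; apply: ln_le'; first lra.
by apply: (le_INR2 (a:=1)).
Qed.

Lemma ln_nat_le m k : (0 < k)%nat -> (k <= m)%nat -> ln (INR k) <= ln (INR m).
Proof. by move=> h1 h2; apply: ln_le'; [exact: INR_pos | exact: le_INR2]. Qed.

Definition phi m := (3 * lam * ln (INR m) + ln (INR m) ^ 2) / (4 * lam).

Lemma G_eq m : 4 ^ m * Rpower (INR m) (- (3 + log2 (INR m)) / 4) =
  exp (2 * lam * INR m - phi m).
Proof.
have lp := lam_gt.
rewrite /Rpower /log2 /phi.
have h4 : 4 ^ m = exp (2 * lam * INR m).
  rewrite -(exp_ln (4 ^ m)); last by apply: pow_lt; lra.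
  rewrite ln_pow; last lra.
  f_equal; replace 4 with (2 * 2) by ring; rewrite ln_mult; try lra.
  rewrite /lam; ring.
rewrite h4 -exp_plus; f_equal; rewrite -/lam; field; lra.
Qed.

Lemma central j : (0 < j)%nat -> (expn 16 j <= expn 'C(2 * j, j) 2 * (4 * j))%nat.
Proof.
elim: j => // j IH _.
case: (posnP j) => [-> //|jp].
have IH' := IH jp.
have e1 : ((j.+1) * 'C(2 * j.+1, j.+1) = 2 * (2 * j + 1) * 'C(2 * j, j))%nat.
  have a := mul_bin_diag (2 * j.+1) j.
  have b := mul_bin_diag (2 * j + 1) j.
  have c : 'C(2 * j + 1, j.+1) = 'C(2 * j + 1, j).
    by rewrite -(bin_sub (n:=2*j+1) (m:=j)) //; [congr 'C(_, _); lia | lia].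
  have d : (2 * j.+1).-1 = (2 * j + 1)%nat by lia.
  have d' : (2 * j + 1).-1 = (2 * j)%nat by lia.
  rewrite d in a; rewrite d' c in b.
  nia.
move: IH' e1; set C := 'C(2 * j, j); set D := 'C(2 * j.+1, j.+1); set P := expn 16 j.
rewrite expnS -/P => h e.
have h2 : (expn j.+1 2 * (16 * P) <= expn j.+1 2 * (expn D 2 * (4 * j.+1)))%nat.
  have -> : (expn j.+1 2 * (expn D 2 * (4 * j.+1)) = expn (2 * (2 * j + 1) * C) 2 * (4 * j.+1))%nat.
    by rewrite -e !expnS !expn0 !muln1; nia.
  have h3 : (expn (2 * j + 1) 2 * P <= expn (2 * j + 1) 2 * (expn C 2 * (4 * j)))%nat by apply: leq_mul.
  nia.
by rewrite expnS -/P; move: h2; rewrite leq_mul2l expn_eq0.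
Qed.

Lemma bin_ge4 m j : (5 * j <= m)%nat -> (expn 4 j <= 'C(m, j))%nat.
Proof.
elim: j => [|j IH] h; first by rewrite bin0.
have e := mul_bin_left m j.
have h' : (5 * j <= m)%nat by lia.
have := IH h'.
rewrite expnS; nia.
Qed.

Lemma ln_ineq2 a b : 0 < a -> 0 < b -> ln a - ln b <= a / b - 1.
Proof.
move=> ha hb; have h := ln_le_sub1 (Rdiv_lt_0_compat _ _ ha hb).
rewrite /Rdiv ln_mult in h; [| lra | by apply: Rinv_0_lt_compat].
rewrite ln_Rinv in h; rewrite /Rdiv; lra.
Qed.

Lemma Cpos m j : (j <= m)%nat -> 0 < INR 'C(m, j).
Proof. by move=> h; apply: INR_pos; rewrite bin_gt0. Qed.

Lemma binB j t s : (0 < j)%nat -> (s <= t)%nat ->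
  ln (INR 'C(2*j,j)) + INR s * INR j / INR (2*j + t) <= ln (INR 'C(2*j + s, j)).
Proof.
move=> jp; elim: s => [|s IH] hs.
  rewrite addn0 (_ : INR 0 = 0) //; rewrite /Rdiv !Rmult_0_l; lra.
have IH' := IH (ltnW hs).
have e := mul_bin_down (2 * j + s.+1) j.
rewrite addnS /= in e.
have e' : INR (2 * j + s).+1 * INR 'C(2 * j + s, j) = INR (j + s).+1 * INR 'C((2 * j + s).+1, j).
  rewrite -!INR_muln' e; congr (INR (_ * _)); lia.
have c1 : 0 < INR 'C(2 * j + s, j) by apply: Cpos; lia.
have c2 : 0 < INR 'C((2 * j + s).+1, j) by apply: Cpos; lia.
have p1 : 0 < INR (2 * j + s).+1 by apply: INR_pos.
have p2 : 0 < INR (j + s).+1 by apply: INR_pos.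
have le := ln_ineq p1 p2.
have := f_equal ln e'; rewrite !ln_mult // => e''.
rewrite addnS.
have Jp := INR_pos jp.
have hq : INR j / INR (2 * j + t) <= INR j / INR (2 * j + s).+1.
  apply: Rmult_le_compat_l; first lra.
  apply: Rinv_le_contravar => //; apply: le_INR2; lia.
have hr : 1 - INR (j + s).+1 / INR (2 * j + s).+1 = INR j / INR (2 * j + s).+1.
  have eD : INR (2 * j + s).+1 = INR (j + s).+1 + INR j by rewrite -INR_addn'; congr INR; lia.
  rewrite eD; field; lra.
rewrite S_INR; lra.
Qed.

Lemma INR2 : INR 2 = 2. Proof. by rewrite /=; lra. Qed.

Lemma ln_small d : ln (INR (128 + d)) <= INR (128 + d) / 10 - 1/2.
Proof.
have lp := lam_lt.
elim: d => [|d IH].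
  rewrite addn0 (_ : 128%nat = expn 2 7) // INR_expn INR2 ln_pow; last lra.
  rewrite -/lam (_ : INR 7 = 7); last by rewrite /=; lra.
  replace (2 ^ 7) with 128 by ring; lra.
have p : 0 < INR (128 + d) by apply: INR_pos; lia.
have h := ln_ineq2 (INR_pos (isT : (0 < (128 + d).+1)%nat)) p.
rewrite addnS S_INR in h *.
have : (INR (128 + d) + 1) / INR (128 + d) - 1 = / INR (128 + d) by field; lra.
have : 128 <= INR (128 + d).
  rewrite INR_addn' (_ : INR 128 = 128); first by have := pos_INR d; lra.
  by rewrite (_ : 128%nat = expn 2 7) // INR_expn INR2; ring.
move=> h1 h2.
have : / INR (128 + d) <= / 128 by apply: Rinv_le_contravar; lra.
lra.
Qed.

Lemma ln_small' m : (128 <= m)%nat -> ln (INR m) <= INR m / 10 - 1/2.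
Proof. by move=> h; rewrite -(subnKC h); apply: ln_small. Qed.

Lemma regB (L lm lk lj lC lC2 J K u : R) :
  1/2 < L -> 0 <= lk -> lk <= lm -> lm <= L + lk -> L + lk - lm <= u ->
  L + lj <= lm -> 4 * L * J <= 2 * lC2 + 2 * L + lj -> lC2 + u * J <= lC ->
  L + lm <= 2 * L * J -> 0 <= u ->
  2 * L * (J + K) - (3 * L * lm + lm ^ 2) / (4 * L) <=
  lC + (2 * L * K - (3 * L * lk + lk ^ 2) / (4 * L)).
Proof.
move=> H1 H2 H3 H4 H5 H6 H7 H8 H9 H10.
have L0 : 0 < L by lra.
suff : 8 * L * L * J - 3 * L * lm - lm ^ 2 <= 4 * L * lC - 3 * L * lk - lk ^ 2.
  move=> h.
  have e1 : 2 * L * (J + K) - (3 * L * lm + lm ^ 2) / (4 * L) =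
            2 * L * K + (8 * L * L * J - 3 * L * lm - lm ^ 2) / (4 * L) by field; lra.
  have e2 : lC + (2 * L * K - (3 * L * lk + lk ^ 2) / (4 * L)) =
            2 * L * K + (4 * L * lC - 3 * L * lk - lk ^ 2) / (4 * L) by field; lra.
  rewrite e1 e2; apply: Rplus_le_compat_l; apply: Rmult_le_compat_r => //.
  left; apply: Rinv_0_lt_compat; lra.
set a := lm - lk.
have a0 : 0 <= a by rewrite /a; lra.
have aL : a <= L by rewrite /a; lra.
have s1 : 4 * L * lC >= 4 * L * lC2 + 4 * L * u * J by nra.
have s2 : 4 * L * lC2 >= 8 * L * L * J - 4 * L * L - 2 * L * lj by nra.
have s3 : 2 * L * lj <= 2 * L * (lm - L) by nra.
have s4 : a * (3 * L + 2 * lm - a) >= a * (2 * L + 2 * lm) by nra.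
have s5 : 2 * (L + lm) * (L - a) <= 2 * (L + lm) * u by apply: Rmult_le_compat_l; [lra | rewrite /a; lra].
have s6 : 2 * (L + lm) * u <= 4 * L * J * u by apply: Rmult_le_compat_r; lra.
have e3 : lm ^ 2 - lk ^ 2 = a * (2 * lm - a) by rewrite /a; ring.
nra.
Qed.

Lemma step m j : (128 <= m)%nat -> (0 < j)%nat -> (2 * j <= m)%nat ->
  exp (2 * lam * INR m - phi m) <= INR 'C(m, j) * exp (2 * lam * INR (m - j) - phi (m - j)).
Proof.
move=> hm jp hj.
set k := (m - j)%nat.
have kp : (0 < k)%nat by rewrite /k; lia.
have jk : (j <= k)%nat by rewrite /k; lia.
have Cp : 0 < INR 'C(m, j) by apply: Cpos; lia.
rewrite -(exp_ln _ Cp) -exp_plus.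
suff H : 2 * lam * INR m - phi m <= ln (INR 'C(m, j)) + (2 * lam * INR k - phi k).
  case: H => [H|->]; [left; exact: exp_increasing | lra].
have L1 := lam_gt.
have eM : INR m = INR j + INR k by rewrite -INR_addn'; congr INR; rewrite /k; lia.
have Mp : 0 < INR m by apply: INR_pos; lia.
have Jp : 0 < INR j by apply: INR_pos.
have Kp : 0 < INR k by apply: INR_pos.
have lk0 := ln_nat_ge0 k.
have lkm : ln (INR k) <= ln (INR m) by apply: ln_nat_le => //; rewrite /k leq_subr.
have l2k : ln (INR (2 * k)) = lam + ln (INR k) by rewrite INR_muln' INR2 ln_mult //; lra.
have lmk : ln (INR m) <= lam + ln (INR k) by rewrite -l2k; apply: ln_nat_le; rewrite /k; lia.
set u := (INR k - INR j) / INR m.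
have u0 : 0 <= u.
  rewrite /u; apply: Rmult_le_pos; last by left; apply: Rinv_0_lt_compat.
  have := le_INR2 jk; lra.
have H5 : lam + ln (INR k) - ln (INR m) <= u.
  have := ln_ineq2 (INR_pos (isT : (0 < 2)%nat)) Mp.
  have := @ln_ineq2 (INR (2 * k)) (INR m); rewrite l2k => h.
  have := h (INR_pos (_ : (0 < 2 * k)%nat)) Mp; rewrite /u INR_muln' INR2 eM.
  move=> h' _; have e : 2 * INR k / (INR j + INR k) - 1 = (INR k - INR j) / (INR j + INR k).
    field; lra.
  rewrite e in h'; apply: h'; lia.
have H6 : lam + ln (INR j) <= ln (INR m).
  have : ln (INR (2 * j)) = lam + ln (INR j) by rewrite INR_muln' INR2 ln_mult //; lra.
  move=> <-; apply: ln_nat_le => //; lia.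
have H7 : 4 * lam * INR j <= 2 * ln (INR 'C(2 * j, j)) + 2 * lam + ln (INR j).
  have c := le_INR2 (central jp).
  have C2p : 0 < INR 'C(2 * j, j) by apply: Cpos; lia.
  have := ln_le' _ c.
  rewrite (_ : expn 16 j = expn 2 (4 * j)); last by rewrite expnM.
  rewrite !INR_expn INR_muln' INR_expn INR2 ln_pow; last lra.
  rewrite ln_mult; [| by apply: pow_lt | by rewrite INR_muln'; apply: Rmult_lt_0_compat => //; apply: (INR_pos (m:=4))].
  rewrite ln_pow // INR_muln' ln_mult //; last by apply: (INR_pos (m:=4)).
  rewrite (_ : INR 4 = 2 * 2); last by rewrite /=; lra.
  rewrite ln_mult; try lra. rewrite -/lam INR2.
  move=> h; have := h (pow_lt _ _ (Rlt_0_2)); lra.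
have H8 : ln (INR 'C(2 * j, j)) + u * INR j <= ln (INR 'C(m, j)).
  have := @binB j (m - 2 * j) (m - 2 * j) jp (leqnn _).
  rewrite subnKC //.
  have -> : INR (m - 2 * j) = INR k - INR j.
    have e : (m - 2 * j + j = k)%nat by rewrite /k; lia.
    rewrite -e INR_addn'; ring.
  rewrite /u; have -> : (INR k - INR j) * INR j / INR m = (INR k - INR j) / INR m * INR j.
    field; lra.
  done.
rewrite {1}eM /phi.
case: (Rle_lt_dec (lam + ln (INR m)) (2 * lam * INR j)) => H9.
  apply: (@regB lam (ln (INR m)) (ln (INR k)) (ln (INR j)) _ (ln (INR 'C(2 * j, j))) _ _ u) => //; lra.
have lsm := ln_small' hm.
have h10 : (10 * j < m)%nat.
  apply: INR_lt_nat; rewrite INR_muln'.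
  have : 2 * lam * INR j < INR m / 10 - 1 / 2 + lam by lra.
  have : 0 <= INR m / 10 - 1 / 2.
    have := le_INR2 hm; rewrite (_ : INR 128 = 128); first lra.
    by rewrite (_ : 128%nat = expn 2 7) // INR_expn INR2; ring.
  rewrite (_ : INR 10 = 10); last by rewrite /=; lra.
  nra.
have c := le_INR2 (bin_ge4 (_ : (5 * j <= m)%nat)).
have {}c := ln_le' _ (c ltac:(lia)).
rewrite INR_expn ln_pow in c; last by rewrite /=; lra.
rewrite (_ : INR 4 = 2 * 2) in c; last by rewrite /=; lra.
rewrite ln_mult -/lam in c; try lra.
have hphi : (3 * lam * ln (INR k) + ln (INR k) ^ 2) / (4 * lam) <=
            (3 * lam * ln (INR m) + ln (INR m) ^ 2) / (4 * lam).
  apply: Rmult_le_compat_r; first by left; apply: Rinv_0_lt_compat; lra.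
  nra.
have := c (pow_lt (2 * 2) j ltac:(lra)); lra.
Qed.

Definition c0 : R := / 4 ^ 128.

Definition Fb (m : nat) : R := c0 * 4 ^ m * Rpower (INR m) (- (3 + log2 (INR m)) / 4).

Lemma c0_pos : 0 < c0.
Proof. by apply: Rinv_0_lt_compat; apply: pow_lt; lra. Qed.

Lemma Fb_G m : Fb m = c0 * exp (2 * lam * INR m - phi m).
Proof. by rewrite /Fb Rmult_assoc G_eq. Qed.

Lemma Fb_ge0 m : 0 <= Fb m.
Proof. rewrite Fb_G; left; apply: Rmult_lt_0_compat; [exact: c0_pos | exact: exp_pos]. Qed.

Lemma Fb_HT m : Fb m <= 1 \/ ((1 < m)%nat /\ forall k, (0 < k < m)%nat ->
         Fb m <= INR 'C(m,k) * (Fb k + Fb (m-k)%nat)).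
Proof.
case: (ltnP m 128) => hm.
  left; rewrite /Fb.
  have r1 : Rpower (INR m) (- (3 + log2 (INR m)) / 4) <= 1.
    rewrite /Rpower -exp_0; have := ln_nat_ge0 m; have := lam_gt; rewrite /log2 -/lam => h1 h2.
    have : 0 <= ln (INR m) / lam by apply: Rmult_le_pos => //; left; apply: Rinv_0_lt_compat; lra.
    move=> h3; have : - (3 + ln (INR m) / lam) / 4 * ln (INR m) <= 0.
      have : 0 <= (3 + ln (INR m) / lam) / 4 * ln (INR m) by apply: Rmult_le_pos => //; lra.
      lra.
    by case => [h|->]; [left; apply: exp_increasing | lra].
  have r2 : c0 * 4 ^ m <= 1.
    have : 4 ^ m <= 4 ^ 128 by apply: Rle_pow; [lra | apply/leP; exact: ltnW].
    have p : 0 < 4 ^ 128 by apply: pow_lt; lra.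
    rewrite /c0 => h; apply: (Rmult_le_reg_l (4 ^ 128)) => //.
    by rewrite -Rmult_assoc Rinv_r ?Rmult_1_l ?Rmult_1_r; lra.
  have r3 : 0 <= Rpower (INR m) (- (3 + log2 (INR m)) / 4) by left; apply: exp_pos.
  have r4 : 0 <= c0 * 4 ^ m by apply: Rmult_le_pos; [left; exact: c0_pos | apply: pow_le; lra].
  have := Rmult_le_compat _ _ _ _ r4 r3 r2 r1; lra.
right; split; first by apply: leq_trans hm.
move=> k /andP [k0 km].
have F1 := Fb_ge0 k; have F2 := Fb_ge0 (m - k).
have cp := c0_pos.
case: (leqP (2 * k) m) => hk.
  have := step hm k0 hk.
  move=> h; apply: Rle_trans (_ : _ <= INR 'C(m, k) * Fb (m - k)) _.
    rewrite !Fb_G; have := Rmult_le_compat_l _ _ _ (Rlt_le _ _ cp) h; lra.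
  apply: Rmult_le_compat_l; [exact: pos_INR | lra].
have hj : (2 * (m - k) <= m)%nat by lia.
have := step hm (_ : (0 < m - k)%nat) hj.
rewrite bin_sub ?(ltnW km) // subKn ?(ltnW km) // => h.
apply: Rle_trans (_ : _ <= INR 'C(m, k) * Fb k) _.
  rewrite !Fb_G; have := Rmult_le_compat_l _ _ _ (Rlt_le _ _ cp) (h ltac:(lia)); lra.
apply: Rmult_le_compat_l; [exact: pos_INR | lra].
Qed.

Delimit Scope nat_scope with N.

Theorem corollary8p6 :
  exists (c : R) (N : nat), (0 < c)%R /\
    forall n : nat, (N <= n)%N ->
      (c * (4 ^ n) * Rpower (INR n) (- (3 + log2 (INR n)) / 4) <= INR (rpn (@Pstar n)))%R.
Proof.
exists c0, 0%nat; split; first exact: c0_pos.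
move=> n _; have := @rpn_ge n Fb Fb_ge0 Fb_HT; rewrite /Fb; exact.
Qed.
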